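(* Let $\Phi$ be a finite crystallographic root system and let $\beta,\gamma\in\Phi^+$ be distinct positive roots. Then \[ \operatorname{Cov}(\mathcal{X}_\beta,\mathcal{X}_\gamma)=\pm\Big(\frac14-\frac{1}{2\cdot\operatorname{ord}(\beta,\gamma)}\Big), \] with the sign positive if $\langle\beta,\gamma\rangle\ge0$ and negative if $\langle\beta,\gamma\rangle\le 0$. In particular, $\mathcal{X}_\beta$ and $\mathcal{X}_\gamma$ are independent if and only if $\beta$ and $\gamma$ are orthogonal.
   Context: $\Phi\subset V$ is a finite crystallographic root system in a Euclidean space with inner product $\langle\cdot,\cdot\rangle$, with positive roots $\Phi^+$ and Weyl group $W$; $s_\beta$ is the reflection in $\beta$. $\operatorname{ord}(\beta,\gamma)=\min\{k>0 : (s_\beta s_\gamma)^k=e\}$. For $\beta\in\Phi^+$, $\mathcal{X}_\beta$ is the Bernoulli random variable on $W$ with the uniform distribution, $\mathcal{X}_\beta(w)=1$ if $w(\beta)\in-\Phi^+$ and $0$ if $w(\beta)\in\Phi^+$. *)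

(* Defs.v *)
From HB Require Import structures.
From mathcomp Require Import all_boot all_order all_algebra.
From mathcomp Require Import reals.
Set Implicit Arguments. Unset Strict Implicit. Unset Printing Implicit Defensive.
Import Order.TTheory GRing.Theory Num.Theory.
Local Open Scope ring_scope.

Section RootSystems.
Variables (R : realType) (n : nat).
Local Notation V := 'rV[R]_n.

Definition dot (u v : V) : R := \sum_(i < n) u 0 i * v 0 i.

(* matrix of the reflection s_a (acting on row vectors on the right):
   v *m refl a = v - (2 <v,a> / <a,a>) a *)
Definition refl (a : V) : 'M[R]_n :=
  1%:M - (2 / dot a a) *: (a^T *m a).

(* Finite crystallographic (reduced) root system Phi in V (Humphreys' def.):
   Phi is finite (a seq), spans V, does not contain 0, the only multiples of
   a root a in Phi are +-a, Phi is stable under each s_a, and the Cartan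
   numbers 2<b,a>/<a,a> are integers. *)
Definition root_system (Phi : seq V) : Prop :=
  [/\ (forall v : V, exists c : 'I_(size Phi) -> R,
          v = \sum_(i < size Phi) c i *: Phi`_i),
      0 \notin Phi,
      (forall a c, a \in Phi -> c *: a \in Phi -> c = 1 \/ c = -1),
      (forall a b, a \in Phi -> b \in Phi -> b *m refl a \in Phi) &
      (forall a b, a \in Phi -> b \in Phi ->
          exists z : int, 2 * dot b a / dot a a = z%:~R)].

(* A positive system is determined by a regular vector x (<a,x> <> 0 for all
   roots): Phi^+ = {a in Phi | <a,x> > 0}. *)
Definition regular (Phi : seq V) (x : V) : Prop :=
  forall a, a \in Phi -> dot a x != 0.

Definition pos_roots (Phi : seq V) (x : V) : seq V :=
  [seq a <- Phi | 0 < dot a x].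

(* Weyl group: the group generated by the reflections s_a, a in Phi
   (each s_a is an involution, so the group is the set of finite products). *)
Definition weyl (Phi : seq V) (M : 'M[R]_n) : Prop :=
  exists rs : seq V, all (mem Phi) rs /\ M = \prod_(a <- rs) refl a.

Definition is_ord (b g : V) (k : nat) : Prop :=
  [/\ (0 < k)%N, (refl b * refl g) ^+ k = 1 &
      forall j, (0 < j < k)%N -> (refl b * refl g) ^+ j != 1].

Definition Xvar (Phi : seq V) (x : V) (b : V) (w : 'M[R]_n) : R :=
  if - (b *m w) \in pos_roots Phi x then 1 else 0.

(* Uniform distribution on W, given by a duplicate-free enumeration ws of W. *)
Definition expect (ws : seq 'M[R]_n) (f : 'M[R]_n -> R) : R :=
  (\sum_(w <- ws) f w) / (size ws)%:R.

Definition covar (ws : seq 'M[R]_n) (X Y : 'M[R]_n -> R) : R :=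
  expect ws (fun w => X w * Y w) - expect ws X * expect ws Y.

Definition prob (ws : seq 'M[R]_n) (P : pred 'M[R]_n) : R :=
  (count P ws)%:R / (size ws)%:R.

Definition indep01 (ws : seq 'M[R]_n) (X Y : 'M[R]_n -> R) : Prop :=
  forall u v : R, u \in [:: 0; 1] -> v \in [:: 0; 1] ->
    prob ws (fun w => (X w == u) && (Y w == v)) =
    prob ws (fun w => X w == u) * prob ws (fun w => Y w == v).

End RootSystems.

(* Main.v *)
Require Import Defs.
From HB Require Import structures.
From mathcomp Require Import all_boot all_order all_algebra.
From mathcomp Require Import reals.
From mathcomp Require Import ring lra zify.
Set Implicit Arguments. Unset Strict Implicit. Unset Printing Implicit Defensive.
Import Order.TTheory GRing.Theory Num.Theory.
Local Open Scope ring_scope.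

Section Basics.
Variables (R : realType) (n : nat).
Local Notation V := 'rV[R]_n.
Local Notation M := 'M[R]_n.
Implicit Types (u v a : V).

Lemma dotC u v : dot u v = dot v u.
Proof. by rewrite /dot; apply: eq_bigr => i _; rewrite mulrC. Qed.

Lemma dotDl u v (c : V) : dot (u + v) c = dot u c + dot v c.
Proof. by rewrite /dot -big_split; apply: eq_bigr => i _; rewrite mxE mulrDl. Qed.

Lemma dotZl (k : R) u (c : V) : dot (k *: u) c = k * dot u c.
Proof. by rewrite /dot mulr_sumr; apply: eq_bigr => i _; rewrite mxE mulrA. Qed.

Lemma dotNl u (c : V) : dot (- u) c = - dot u c.
Proof. by rewrite -scaleN1r dotZl mulN1r. Qed.

Lemma dotBl u v (c : V) : dot (u - v) c = dot u c - dot v c.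
Proof. by rewrite dotDl dotNl. Qed.

Lemma dot0l (c : V) : dot 0 c = 0.
Proof. by rewrite -(scale0r (0 : V)) dotZl mul0r. Qed.

Lemma dot_ge0 v : 0 <= dot v v.
Proof. by rewrite /dot; apply: sumr_ge0 => i _; rewrite -expr2 sqr_ge0. Qed.

Lemma dot_eq0 v : dot v v = 0 -> v = 0.
Proof.
move=> /eqP; rewrite /dot psumr_eq0; last by move=> i _; rewrite -expr2 sqr_ge0.
move=> /allP H; apply/rowP => i; rewrite mxE.
have /implyP := H i (mem_index_enum i).
by move=> /(_ isT); rewrite mulf_eq0 orbb => /eqP.
Qed.

Lemma dot_gt0 v : v != 0 -> 0 < dot v v.
Proof. by move=> nz; rewrite lt_def dot_ge0 andbT; apply: contra nz => /eqP/dot_eq0 ->. Qed.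

Lemma mul_tr u v : u *m v^T = (dot u v)%:M.
Proof.
apply/matrixP => i j; rewrite !ord1 !mxE /dot /=.
by apply: eq_bigr => k _; rewrite !mxE.
Qed.

Lemma refl_vec v a : v *m refl a = v - (2 / dot a a * dot v a) *: a.
Proof.
rewrite /refl mulmxBr mulmx1 -scalemxAr mulmxA mul_tr mul_scalar_mx.
by rewrite scalerA mulrC.
Qed.


Lemma refl_self a : a != 0 -> a *m refl a = - a.
Proof.
move=> nz; have := dot_gt0 nz; rewrite lt0r => /andP[H _].
rewrite refl_vec.
have -> : 2 / dot a a * dot a a = 2 by field.
by apply/rowP => i; rewrite !mxE; ring.
Qed.

Lemma refl_invol a : a != 0 -> refl a * refl a = 1.
Proof.
move=> nz; have := dot_gt0 nz; rewrite lt0r => /andP[H _].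
apply/row_matrixP => i; rewrite !rowE -mulmxE mulmxA mulmx1.
set v := 'e_i.
rewrite [v *m _]refl_vec refl_vec dotBl dotZl.
have -> : 2 / dot a a * (dot v a - 2 / dot a a * dot v a * dot a a) = - (2 / dot a a * dot v a).
  by field.
by rewrite scaleNr opprK subrK.
Qed.

Definition act (P Q A B : R) (c : bool) (p : R * R) : R * R :=
  if c then (- p.1 - p.2 * A - P, p.2) else (p.1, - p.2 - p.1 * B - Q).

Definition matw (b g : V) (c : bool) : M := refl (if c then b else g).

Definition cA (b g : V) : R := 2 * dot g b / dot b b.
Definition cB (b g : V) : R := 2 * dot b g / dot g g.

Lemma step v b g (p : R * R) c : b != 0 -> g != 0 ->
  (v + p.1 *: b + p.2 *: g) *m matw b g c =
  let q := act (2 * dot v b / dot b b) (2 * dot v g / dot g g) (cA b g) (cB b g) c p in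
  v + q.1 *: b + q.2 *: g.
Proof.
move=> nzb nzg; have := dot_gt0 nzb; rewrite lt0r => /andP[Hb _].
have := dot_gt0 nzg; rewrite lt0r => /andP[Hg _].
case: p => al be; rewrite /matw /act /cA /cB; case: c => /=; rewrite refl_vec !dotDl !dotZl.
- have -> : 2 / dot b b * (dot v b + al * dot b b + be * dot g b) = 2 * dot v b / dot b b + 2 * al + be * (2 * dot g b / dot b b).
    by field.
  by apply/rowP => i; rewrite !mxE; ring.
- have -> : 2 / dot g g * (dot v g + al * dot b g + be * dot g g) = 2 * dot v g / dot g g + 2 * be + al * (2 * dot b g / dot g g).
    by field.
  by apply/rowP => i; rewrite !mxE; ring.
Qed.

Lemma fold_word v b g (p : R * R) (s : seq bool) : b != 0 -> g != 0 ->
  (v + p.1 *: b + p.2 *: g) *m \prod_(c <- s) matw b g c =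
  let q := foldl (fun p c => act (2 * dot v b / dot b b) (2 * dot v g / dot g g) (cA b g) (cB b g) c p) p s in
  v + q.1 *: b + q.2 *: g.
Proof.
move=> nzb nzg; elim: s p => [|c s IH] p /=; first by rewrite big_nil mulmx1.
by rewrite big_cons -mulmxE mulmxA step // IH.
Qed.

Lemma rpow_word b g j :
  (refl b * refl g) ^+ j = \prod_(c <- flatten (nseq j [:: true; false])) matw b g c.
Proof.
elim: j => [|j IH]; first by rewrite expr0 big_nil.
by rewrite exprS IH /= !big_cons mulrA.
Qed.

End Basics.

Definition actz (P Q A B : int) (c : bool) (p : int * int) : int * int :=
  if c then (- p.1 - p.2 * A - P, p.2) else (p.1, - p.2 - p.1 * B - Q).
Definition fwz (P Q A B : int) (s : seq bool) :=
  foldl (fun p c => actz P Q A B c p) (0, 0) s.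

Definition rw (j : nat) : seq bool := flatten (nseq j [:: true; false]).
Definition words (m : nat) : seq (seq bool) :=
  [seq rw j | j <- iota 0 m] ++ [seq rw j ++ [:: false] | j <- iota 0 m].

Section TwoD.
Variable R : realType.

Definition fw (P Q A B : R) (s : seq bool) :=
  foldl (fun p c => act P Q A B c p) (0, 0) s.

Definition castp (p : int * int) : R * R := (p.1%:~R, p.2%:~R).

Lemma fw_cast (P Q A B : int) s :
  fw P%:~R Q%:~R A%:~R B%:~R s = castp (fwz P Q A B s).
Proof.
rewrite /fw /fwz; have : ((0 : R), (0 : R)) = castp (0, 0) by rewrite /castp.
move=> ->; elim: s (0 : int, 0 : int) => [|c s IH] p //=.
rewrite -IH; congr foldl; rewrite /act /actz /castp; case: c => /=;
  by rewrite ?rmorphB ?rmorphN ?rmorphM.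
Qed.

Definition addp (p q : R * R) := (p.1 + q.1, p.2 + q.2).
Definition sclp (k : R) (p : R * R) := (k * p.1, k * p.2).

Lemma fw_lin (P Q A B : R) s :
  fw P Q A B s = addp (sclp P (fw 1 0 A B s)) (sclp Q (fw 0 1 A B s)).
Proof.
rewrite /fw.
have : forall p1 p2 : R * R, foldl (fun p c => act P Q A B c p) (addp (sclp P p1) (sclp Q p2)) s
  = addp (sclp P (foldl (fun p c => act 1 0 A B c p) p1 s)) (sclp Q (foldl (fun p c => act 0 1 A B c p) p2 s)).
  elim: s => [|c s IH] p1 p2 //=; rewrite -IH; congr foldl.
  by case: p1 p2 => a1 b1 [a2 b2]; rewrite /act /addp /sclp; case: c => /=; congr pair; ring.
move=> H; rewrite -H; congr foldl; rewrite /addp /sclp /=; congr pair; ring.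
Qed.

Definition cb (a b : int) s := let p := fwz 2 b a b s in (1 + p.1, p.2).
Definition cg (a b : int) s := let p := fwz a 2 a b s in (p.1, 1 + p.2).
Definition lin (c : int * int) (u v : R) := c.1%:~R * u + c.2%:~R * v.
Definition posp (c : int * int) : bool := (0 < c.1) || ((c.1 == 0) && (0 < c.2)).
Definition nrm (c : int * int) := if posp c then (true, c) else (false, (- c.1, - c.2)).
Definition ntest (bc : bool * (int * int)) (u v : R) :=
  if bc.1 then lin bc.2 u v < 0 else 0 < lin bc.2 u v.

Lemma lin_neg c u v : lin (- c.1, - c.2) u v = - lin c u v.
Proof. by rewrite /lin /= !rmorphN; ring. Qed.

Lemma ntestE c u v : (lin c u v < 0) = ntest (nrm c) u v.
Proof. by rewrite /ntest /nrm; case: posp => //=; rewrite lin_neg oppr_gt0. Qed.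

Lemma nrm_nz c u v : (lin c u v != 0) = (lin (nrm c).2 u v != 0).
Proof. by rewrite /nrm; case: posp => //=; rewrite lin_neg oppr_eq0. Qed.

Definition bothz (a b : int) (u v : R) s :=
  (lin (cb a b s) u v < 0) && (lin (cg a b s) u v < 0).

Lemma sum_words_map (a b : int) m (u v : R) :
  (\sum_(s <- words m) bothz a b u v s =
   \sum_(pq <- map (fun s => (nrm (cb a b s), nrm (cg a b s))) (words m))
      (ntest pq.1 u v && ntest pq.2 u v))%N.
Proof. by rewrite big_map; apply: eq_bigr => s _; rewrite /bothz !ntestE. Qed.

Lemma all_words_map (a b : int) m (u v : R) :
  (forall s, lin (cb a b s) u v != 0) -> (forall s, lin (cg a b s) u v != 0) ->
  all (fun c => lin c u v != 0)
    (undup (map (fun s => (nrm (cb a b s)).2) (words m) ++ map (fun s => (nrm (cg a b s)).2) (words m))).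
Proof.
move=> Hb Hg; apply/allP => c; rewrite mem_undup mem_cat => /orP[] /mapP [s _ ->];
  by rewrite -nrm_nz.
Qed.

End TwoD.

Ltac split_signs :=
  repeat match goal with
  | H : is_true (~~ (?F == ?z)) |- _ =>
      let h := fresh "h" in
      move: H; case: (ltgtP F z) => [h|h|_]; [ move=> _ | move=> _ | by [] ]
  end.

Ltac count_tac :=
  let u := fresh "u" in let v := fresh "v" in let Hb := fresh "Hb" in let Hg := fresh "Hg" in
  move=> u v Hb Hg;
  match goal with |- context [words ?m] => have := all_words_map m Hb Hg end;
  rewrite sum_words_map;
  match goal with |- context [undup ?l] =>
    let t := eval vm_compute in (undup l) in
    have -> : undup l = t by [] end;
  match goal with |- context [map ?f (words ?m)] =>
    let t := eval vm_compute in (map f (words m)) in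
    have -> : map f (words m) = t by [] end;
  clear Hb Hg;
  rewrite !big_cons big_nil; cbn [all fst snd ntest]; rewrite /lin; cbn [fst snd];
  move=> H;
  repeat match goal with H : is_true (_ && _) |- _ =>
    let h1 := fresh "hn" in let h2 := fresh "hn" in case/andP: H => h1 h2 end;
  split_signs; first [by [] | exfalso; lra].

Lemma cnt0 (R : realType) : forall u v : R, (forall s, lin (cb (0) (0) s) u v != 0) -> (forall s, lin (cg (0) (0) s) u v != 0) ->
      (\sum_(s <- words 2) bothz (0) (0) u v s = 1)%N.
Proof. count_tac. Qed.
Lemma cnt1 (R : realType) : forall u v : R, (forall s, lin (cb (1) (1) s) u v != 0) -> (forall s, lin (cg (1) (1) s) u v != 0) ->
      (\sum_(s <- words 3) bothz (1) (1) u v s = 2)%N.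
Proof. count_tac. Qed.
Lemma cnt2 (R : realType) : forall u v : R, (forall s, lin (cb (-1) (-1) s) u v != 0) -> (forall s, lin (cg (-1) (-1) s) u v != 0) ->
      (\sum_(s <- words 3) bothz (-1) (-1) u v s = 1)%N.
Proof. count_tac. Qed.
Lemma cnt3 (R : realType) : forall u v : R, (forall s, lin (cb (1) (2) s) u v != 0) -> (forall s, lin (cg (1) (2) s) u v != 0) ->
      (\sum_(s <- words 4) bothz (1) (2) u v s = 3)%N.
Proof. count_tac. Qed.
Lemma cnt4 (R : realType) : forall u v : R, (forall s, lin (cb (2) (1) s) u v != 0) -> (forall s, lin (cg (2) (1) s) u v != 0) ->
      (\sum_(s <- words 4) bothz (2) (1) u v s = 3)%N.
Proof. count_tac. Qed.
Lemma cnt5 (R : realType) : forall u v : R, (forall s, lin (cb (-1) (-2) s) u v != 0) -> (forall s, lin (cg (-1) (-2) s) u v != 0) ->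
      (\sum_(s <- words 4) bothz (-1) (-2) u v s = 1)%N.
Proof. count_tac. Qed.
Lemma cnt6 (R : realType) : forall u v : R, (forall s, lin (cb (-2) (-1) s) u v != 0) -> (forall s, lin (cg (-2) (-1) s) u v != 0) ->
      (\sum_(s <- words 4) bothz (-2) (-1) u v s = 1)%N.
Proof. count_tac. Qed.
Lemma cnt7 (R : realType) : forall u v : R, (forall s, lin (cb (1) (3) s) u v != 0) -> (forall s, lin (cg (1) (3) s) u v != 0) ->
      (\sum_(s <- words 6) bothz (1) (3) u v s = 5)%N.
Proof. count_tac. Qed.
Lemma cnt8 (R : realType) : forall u v : R, (forall s, lin (cb (3) (1) s) u v != 0) -> (forall s, lin (cg (3) (1) s) u v != 0) ->
      (\sum_(s <- words 6) bothz (3) (1) u v s = 5)%N.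
Proof. count_tac. Qed.
Lemma cnt9 (R : realType) : forall u v : R, (forall s, lin (cb (-1) (-3) s) u v != 0) -> (forall s, lin (cg (-1) (-3) s) u v != 0) ->
      (\sum_(s <- words 6) bothz (-1) (-3) u v s = 1)%N.
Proof. count_tac. Qed.
Lemma cnt10 (R : realType) : forall u v : R, (forall s, lin (cb (-3) (-1) s) u v != 0) -> (forall s, lin (cg (-3) (-1) s) u v != 0) ->
      (\sum_(s <- words 6) bothz (-3) (-1) u v s = 1)%N.
Proof. count_tac. Qed.
Lemma dat0 : [/\ fwz 1 0 (0) (0) (rw 2) = (0, 0), fwz 0 1 (0) (0) (rw 2) = (0, 0) &
  all (fun j => fwz 2 (0) (0) (0) (rw j) != (0, 0)) (iota 1 2.-1)].
Proof. by vm_compute; split. Qed.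
Lemma dat1 : [/\ fwz 1 0 (1) (1) (rw 3) = (0, 0), fwz 0 1 (1) (1) (rw 3) = (0, 0) &
  all (fun j => fwz 2 (1) (1) (1) (rw j) != (0, 0)) (iota 1 3.-1)].
Proof. by vm_compute; split. Qed.
Lemma dat2 : [/\ fwz 1 0 (-1) (-1) (rw 3) = (0, 0), fwz 0 1 (-1) (-1) (rw 3) = (0, 0) &
  all (fun j => fwz 2 (-1) (-1) (-1) (rw j) != (0, 0)) (iota 1 3.-1)].
Proof. by vm_compute; split. Qed.
Lemma dat3 : [/\ fwz 1 0 (1) (2) (rw 4) = (0, 0), fwz 0 1 (1) (2) (rw 4) = (0, 0) &
  all (fun j => fwz 2 (2) (1) (2) (rw j) != (0, 0)) (iota 1 4.-1)].
Proof. by vm_compute; split. Qed.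
Lemma dat4 : [/\ fwz 1 0 (2) (1) (rw 4) = (0, 0), fwz 0 1 (2) (1) (rw 4) = (0, 0) &
  all (fun j => fwz 2 (1) (2) (1) (rw j) != (0, 0)) (iota 1 4.-1)].
Proof. by vm_compute; split. Qed.
Lemma dat5 : [/\ fwz 1 0 (-1) (-2) (rw 4) = (0, 0), fwz 0 1 (-1) (-2) (rw 4) = (0, 0) &
  all (fun j => fwz 2 (-2) (-1) (-2) (rw j) != (0, 0)) (iota 1 4.-1)].
Proof. by vm_compute; split. Qed.
Lemma dat6 : [/\ fwz 1 0 (-2) (-1) (rw 4) = (0, 0), fwz 0 1 (-2) (-1) (rw 4) = (0, 0) &
  all (fun j => fwz 2 (-1) (-2) (-1) (rw j) != (0, 0)) (iota 1 4.-1)].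
Proof. by vm_compute; split. Qed.
Lemma dat7 : [/\ fwz 1 0 (1) (3) (rw 6) = (0, 0), fwz 0 1 (1) (3) (rw 6) = (0, 0) &
  all (fun j => fwz 2 (3) (1) (3) (rw j) != (0, 0)) (iota 1 6.-1)].
Proof. by vm_compute; split. Qed.
Lemma dat8 : [/\ fwz 1 0 (3) (1) (rw 6) = (0, 0), fwz 0 1 (3) (1) (rw 6) = (0, 0) &
  all (fun j => fwz 2 (1) (3) (1) (rw j) != (0, 0)) (iota 1 6.-1)].
Proof. by vm_compute; split. Qed.
Lemma dat9 : [/\ fwz 1 0 (-1) (-3) (rw 6) = (0, 0), fwz 0 1 (-1) (-3) (rw 6) = (0, 0) &
  all (fun j => fwz 2 (-3) (-1) (-3) (rw j) != (0, 0)) (iota 1 6.-1)].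
Proof. by vm_compute; split. Qed.
Lemma dat10 : [/\ fwz 1 0 (-3) (-1) (rw 6) = (0, 0), fwz 0 1 (-3) (-1) (rw 6) = (0, 0) &
  all (fun j => fwz 2 (-1) (-3) (-1) (rw j) != (0, 0)) (iota 1 6.-1)].
Proof. by vm_compute; split. Qed.

Section Weyl.
Variables (R : realType) (n : nat).
Local Notation V := 'rV[R]_n.
Local Notation M := 'M[R]_n.
Variables (Phi : seq V) (ws : seq M).
Hypothesis rsP : root_system Phi.
Hypothesis Hws : forall W : M, W \in ws <-> weyl Phi W.
Hypothesis uws : uniq ws.

Lemma phi_nz a : a \in Phi -> a != 0.
Proof. by case: rsP => _ H0 _ _ _ aP; apply: contraNneq H0 => <-. Qed.

Lemma phi_refl a c : a \in Phi -> c \in Phi -> c *m refl a \in Phi.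
Proof. by case: rsP => _ _ _ H _; apply: H. Qed.

Lemma phi_opp a : a \in Phi -> - a \in Phi.
Proof. by move=> aP; rewrite -refl_self ?phi_nz // phi_refl. Qed.

Lemma phi_weyl a w : a \in Phi -> weyl Phi w -> a *m w \in Phi.
Proof.
move=> aP [rs [/allP Hrs ->]]; elim: rs a aP Hrs => [|c rs IH] a aP Hrs.
  by rewrite big_nil mulmx1.
have cP : c \in Phi by apply: (Hrs c); rewrite mem_head.
rewrite big_cons -mulmxE mulmxA IH //; first exact: phi_refl.
by move=> y yin; apply: Hrs; rewrite in_cons yin orbT.
Qed.

Lemma one_ws : (1 : M) \in ws.
Proof. by apply/Hws; exists [::]; rewrite big_nil. Qed.

Lemma size_ws_gt0 : (0 < size ws)%N.
Proof. by case: ws one_ws. Qed.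

Lemma weyl_reflM c w : c \in Phi -> weyl Phi w -> weyl Phi (refl c *m w).
Proof.
move=> cP [rs [Hrs ->]]; exists (c :: rs); rewrite big_cons mulmxE; split => //.
by rewrite /= Hrs andbT.
Qed.

Lemma sum_refl (F : M -> nat) c : c \in Phi ->
  (\sum_(w <- ws) F (refl c *m w) = \sum_(w <- ws) F w)%N.
Proof.
move=> cP; rewrite -(big_map (fun w => refl c *m w) xpredT F).
have inv w : refl c *m (refl c *m w) = w.
  by rewrite mulmxA mulmxE refl_invol ?phi_nz // mul1mx.
apply: perm_big; apply: uniq_perm.
- rewrite map_inj_uniq //; move=> w1 w2 /(congr1 (fun y => refl c *m y)).
  by rewrite !inv.
- by [].
move=> y; apply/mapP/idP.
- by case=> w /Hws wP ->; apply/Hws/weyl_reflM.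
- move=> yin; exists (refl c *m y); last by rewrite inv.
  by apply/Hws/weyl_reflM => //; apply/Hws.
Qed.

Lemma sum_word (F : M -> nat) b g (s : seq bool) : b \in Phi -> g \in Phi ->
  (\sum_(w <- ws) F (\prod_(c <- s) matw b g c *m w) = \sum_(w <- ws) F w)%N.
Proof.
move=> bP gP; elim: s F => [|c s IH] F; first by apply: eq_bigr => w _; rewrite big_nil mul1mx.
rewrite (eq_bigr (fun w => F (matw b g c *m (\prod_(c <- s) matw b g c *m w)))); last first.
  by move=> w _; rewrite big_cons -mulmxE mulmxA.
rewrite (IH (fun w => F (matw b g c *m w))).
by rewrite /matw; apply: sum_refl; case: c.
Qed.

Lemma weyl_word b g (s : seq bool) : b \in Phi -> g \in Phi ->
  weyl Phi (\prod_(c <- s) matw b g c).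
Proof.
move=> bP gP; exists [seq (if c then b else g) | c <- s]; split.
  by apply/allP => y /mapP [c _ ->]; case: c.
by rewrite big_map.
Qed.

Lemma weylM w1 w2 : weyl Phi w1 -> weyl Phi w2 -> weyl Phi (w1 *m w2).
Proof.
move=> [r1 [H1 ->]] [r2 [H2 ->]]; exists (r1 ++ r2); split.
  by rewrite all_cat H1 H2.
by rewrite big_cat mulmxE.
Qed.

Lemma double_count (F : M -> nat) b g (L : seq (seq bool)) (N : nat) :
  b \in Phi -> g \in Phi ->
  (forall w, w \in ws -> \sum_(s <- L) F (\prod_(c <- s) matw b g c *m w) = N)%N ->
  (size L * \sum_(w <- ws) F w = size ws * N)%N.
Proof.
move=> bP gP H.
have -> : (size L * \sum_(w <- ws) F w = \sum_(s <- L) \sum_(w <- ws) F (\prod_(c <- s) matw b g c *m w))%N.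
  rewrite [RHS](eq_bigr (fun _ => \sum_(w <- ws) F w)); last by move=> s _; rewrite sum_word.
  by rewrite big_const_seq count_predT iter_addn_0 mulnC.
rewrite exchange_big /= (eq_big_seq (fun _ => N)); last by move=> w /H.
by rewrite big_const_seq count_predT iter_addn_0 mulnC.
Qed.


Variable x : V.
Hypothesis Hreg : regular Phi x.

Lemma Xvar_E a w : a \in Phi -> w \in ws -> Xvar Phi x a w = ((dot (a *m w) x < 0)%R : nat)%:R.
Proof.
move=> aP /Hws wW; rewrite /Xvar /pos_roots mem_filter phi_opp ?phi_weyl // andbT.
by rewrite dotNl oppr_gt0; case: (_ < 0).
Qed.

Lemma dot_nz a w : a \in Phi -> weyl Phi w -> dot (a *m w) x != 0.
Proof. by move=> aP wW; apply: Hreg; apply: phi_weyl. Qed.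

Lemma size_ws_neq0 : (size ws)%:R != 0 :> R.
Proof. by rewrite pnatr_eq0 -lt0n size_ws_gt0. Qed.

Lemma expect_half a : a \in Phi -> expect ws (Xvar Phi x a) = 1 / 2.
Proof.
move=> aP.
have H := @double_count (fun w => (dot (a *m w) x < 0)%R) a a [:: [::]; [:: true]] 1%N aP aP.
have /H {H} H : forall w, w \in ws ->
   (\sum_(s <- [:: [::]; [:: true]]) (dot (a *m (\prod_(c <- s) matw a a c *m w)) x < 0)%R = 1)%N.
  move=> w /Hws wW; rewrite !big_cons !big_nil mul1mx mulr1 /matw /= addn0.
  rewrite mulmxA refl_self ?phi_nz // mulNmx dotNl oppr_lt0.
  have := dot_nz aP wW; case: ltgtP => //.
rewrite /expect (eq_big_seq (fun w => ((dot (a *m w) x < 0)%R : nat)%:R)); last by move=> w wP; rewrite Xvar_E.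
rewrite -natr_sum; move: H; set S := (\sum_(w <- ws) _)%N => /= H.
have H2 : (2 * S)%:R = (size ws)%:R :> R by rewrite H muln1.
rewrite natrM in H2.
have nz := size_ws_neq0; rewrite -H2 in nz.
have Snz : S%:R != 0 :> R by apply: contra nz => /eqP ->; rewrite mulr0.
by rewrite -H2; field.
Qed.


Lemma indep_bg b g : b \in Phi -> g \in Phi -> b != g -> g != - b ->
  forall al be : R, al *: b + be *: g = 0 -> al = 0 /\ be = 0.
Proof.
move=> bP gP bg gnb al be H.
case: (eqVneq be 0) => [be0|benz].
  subst be; split => //; move: H; rewrite scale0r addr0 => /eqP.
  by rewrite scaler_eq0 (negbTE (phi_nz bP)) orbF => /eqP.
have Hg : be *: g = - (al *: b).
  by apply/eqP; rewrite -subr_eq0 opprK addrC H.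
have gE : g = (- al / be) *: b.
  by rewrite mulrC -scalerA scaleNr -Hg scalerA mulVf // scale1r.
case: rsP => _ _ Hm _ _.
have : (- al / be) *: b \in Phi by rewrite -gE.
case/(Hm _ _ bP) => Hc; move: gE; rewrite Hc ?scale1r ?scaleN1r => gE.
  by move: bg; rewrite gE eqxx.
by move: gnb; rewrite gE eqxx.
Qed.

Lemma dotC' (u v : V) : dot u v = dot v u.
Proof. exact: dotC. Qed.

Lemma cs_strict b g : b \in Phi -> g \in Phi -> b != g -> g != - b ->
  dot b g ^+ 2 < dot b b * dot g g.
Proof.
move=> bP gP bg gnb.
have bb0 : dot b b != 0 by rewrite gt_eqF // dot_gt0 // phi_nz.
set t := dot g b / dot b b.
set h := g - t *: b.
have hnz : h != 0.
  apply/eqP => h0; have [] := @indep_bg b g bP gP bg gnb (- t) 1.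
    by rewrite scale1r addrC scaleNr.
  by move=> _ /eqP; rewrite oner_eq0.
have := dot_gt0 hnz.
have -> : dot h h = dot g g - t * dot b g.
  rewrite /h dotBl dotZl [dot g _]dotC [dot b _]dotC !dotBl !dotZl.
  rewrite /t; field => //.
rewrite subr_gt0 /t [dot g b]dotC => H.
have bbp : 0 < dot b b by rewrite dot_gt0 // phi_nz.
rewrite expr2; move: H; rewrite -(ltr_pM2r bbp).
have -> : dot b g / dot b b * dot b g * dot b b = dot b g * dot b g by field.
by rewrite [_ * dot g g]mulrC.
Qed.

Lemma fold_fw (v b g : V) (s : seq bool) : b != 0 -> g != 0 ->
  v *m \prod_(c <- s) matw b g c =
  v + (@fw R (2 * dot v b / dot b b) (2 * dot v g / dot g g) (cA b g) (cB b g) s).1 *: b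
    + (@fw R (2 * dot v b / dot b b) (2 * dot v g / dot g g) (cA b g) (cB b g) s).2 *: g.
Proof.
move=> nzb nzg; have := @fold_word R n v b g (0, 0) s nzb nzg.
by rewrite /= !scale0r !addr0.
Qed.

Section Pair.
Variables (b g : V) (za zb : int).
Hypotheses (bP : b \in Phi) (gP : g \in Phi) (bg : b != g) (gnb : g != - b).
Hypotheses (HA : cA b g = za%:~R) (HB : cB b g = zb%:~R).

Let nzb := phi_nz bP.
Let nzg := phi_nz gP.

Lemma word_b s : b *m \prod_(c <- s) matw b g c =
  b + (castp R (fwz 2 zb za zb s)).1 *: b + (castp R (fwz 2 zb za zb s)).2 *: g.
Proof.
rewrite fold_fw // -/(cB b g) HA HB.
have bb0 : dot b b != 0 by rewrite gt_eqF // dot_gt0.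
rewrite (_ : 2 * dot b b / dot b b = (2%:~R : R)); last by rewrite mulfK.
by rewrite fw_cast.
Qed.

Lemma word_g s : g *m \prod_(c <- s) matw b g c =
  g + (castp R (fwz za 2 za zb s)).1 *: b + (castp R (fwz za 2 za zb s)).2 *: g.
Proof.
rewrite fold_fw // -/(cA b g) HA HB.
have gg0 : dot g g != 0 by rewrite gt_eqF // dot_gt0.
rewrite (_ : 2 * dot g g / dot g g = (2%:~R : R)); last by rewrite mulfK.
by rewrite fw_cast.
Qed.

Lemma form_b s w : dot (b *m (\prod_(c <- s) matw b g c *m w)) x =
  lin (cb za zb s) (dot (b *m w) x) (dot (g *m w) x).
Proof.
rewrite mulmxA word_b !mulmxDl -!scalemxAl !dotDl !dotZl /lin /cb /castp /=.
by rewrite rmorphD /=; ring.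
Qed.

Lemma form_g s w : dot (g *m (\prod_(c <- s) matw b g c *m w)) x =
  lin (cg za zb s) (dot (b *m w) x) (dot (g *m w) x).
Proof.
rewrite mulmxA word_g !mulmxDl -!scalemxAl !dotDl !dotZl /lin /cg /castp /=.
by rewrite rmorphD /=; ring.
Qed.

Lemma rpow_one m : fwz 1 0 za zb (rw m) = (0, 0) -> fwz 0 1 za zb (rw m) = (0, 0) ->
  (refl b * refl g) ^+ m = 1.
Proof.
move=> H1 H0; apply/row_matrixP => i; rewrite !rowE rpow_word mulmx1.
rewrite fold_fw // HA HB fw_lin.
have -> : fw (1 : R) 0 za%:~R zb%:~R (rw m) = castp R (fwz 1 0 za zb (rw m)) by rewrite -fw_cast.
have -> : fw (0 : R) 1 za%:~R zb%:~R (rw m) = castp R (fwz 0 1 za zb (rw m)) by rewrite -fw_cast.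
by rewrite H1 H0 /addp /sclp /castp /= !mulr0 !addr0 !scale0r !addr0.
Qed.

Lemma rpow_not_one j : fwz 2 zb za zb (rw j) != (0, 0) -> (refl b * refl g) ^+ j != 1.
Proof.
move=> Hnz; apply/eqP => H1.
have := word_b (rw j); rewrite -rpow_word H1 mulmx1 -addrA => E.
have HZ : (castp R (fwz 2 zb za zb (rw j))).1 *: b + (castp R (fwz 2 zb za zb (rw j))).2 *: g = 0.
  by apply: (addrI b); rewrite addr0 -E.
move: HZ Hnz; case: (fwz 2 zb za zb (rw j)) => z1 z2; rewrite /castp /=.
move=> /(indep_bg bP gP bg gnb) [/eqP]; rewrite intr_eq0 => /eqP -> /eqP.
by rewrite intr_eq0 => /eqP ->.
Qed.


Lemma k_eq m k : (0 < m)%N -> fwz 1 0 za zb (rw m) = (0, 0) -> fwz 0 1 za zb (rw m) = (0, 0) ->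
  all (fun j => fwz 2 zb za zb (rw j) != (0, 0)) (iota 1 m.-1) -> is_ord b g k -> k = m.
Proof.
move=> m0 H1 H0 Hall [k0 Hk Hmin].
have rm := rpow_one H1 H0.
case: (ltngtP m k) => // [mk|km].
  by have := Hmin m; rewrite m0 mk => /(_ isT); rewrite rm eqxx.
have : k \in iota 1 m.-1 by rewrite mem_iota; lia.
by move/(allP Hall)/rpow_not_one; rewrite Hk eqxx.
Qed.

Lemma expect_bg m N : (0 < m)%N ->
  (forall u v : R, (forall s, lin (cb za zb s) u v != 0) -> (forall s, lin (cg za zb s) u v != 0) ->
     (\sum_(s <- words m) bothz za zb u v s = N)%N) ->
  expect ws (fun w => Xvar Phi x b w * Xvar Phi x g w) = N%:R / (2 * m)%:R.
Proof.
move=> m0 Hc.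
pose F := fun w => ((dot (b *m w) x < 0)%R && (dot (g *m w) x < 0)%R).
have H := @double_count F b g (words m) N bP gP.
have /H {H} H : forall w, w \in ws -> (\sum_(s <- words m) F (\prod_(c <- s) matw b g c *m w) = N)%N.
  move=> w /Hws wW.
  rewrite (eq_bigr (fun s => nat_of_bool (bothz za zb (dot (b *m w) x) (dot (g *m w) x) s))); last first.
    by move=> s _; rewrite /F /bothz form_b form_g.
  by apply: Hc => s; rewrite -?form_b -?form_g; apply: dot_nz => //; apply: weylM => //; exact: weyl_word.
rewrite /expect (eq_big_seq (fun w => (F w : nat)%:R)); last first.
  by move=> w wP; rewrite /F !Xvar_E //; case: (_ < 0)%R; case: (_ < 0)%R; rewrite /= ?mulr0 ?mulr1.
rewrite -natr_sum.
have Hs : size (words m) = (2 * m)%N by rewrite /words size_cat !size_map size_iota addnn mul2n.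
rewrite Hs in H.
have H2 : ((2 * m)%:R * (\sum_(w <- ws) F w)%:R = (size ws)%:R * N%:R :> R) by rewrite -!natrM H.
have nz := size_ws_neq0.
have mnz : (2 * m)%:R != 0 :> R by rewrite pnatr_eq0 muln_eq0 negb_or /=; lia.
apply: (mulfI mnz); rewrite mulrA H2; field.
by rewrite nz andbT pnatr_eq0 -lt0n.
Qed.

End Pair.

End Weyl.

Section Prob.
Variables (R : realType) (n : nat).
Local Notation M := 'M[R]_n.
Variable ws : seq M.
Hypothesis wsnz : (size ws)%:R != 0 :> R.

Lemma expectD (f h : M -> R) : expect ws (fun w => f w + h w) = expect ws f + expect ws h.
Proof. by rewrite /expect big_split /= mulrDl. Qed.

Lemma expectZ (c : R) (f : M -> R) : expect ws (fun w => c * f w) = c * expect ws f.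
Proof. by rewrite /expect -mulr_sumr mulrA. Qed.

Lemma expectC (c : R) : expect ws (fun _ => c) = c.
Proof.
rewrite /expect; have -> : \sum_(w <- ws) c = c * (size ws)%:R.
  by elim: ws => [|w s IH]; rewrite ?big_nil ?big_cons ?mulr0 //= IH -addn1 natrD; ring.
by rewrite mulfK.
Qed.

Lemma expect_eq (f h : M -> R) : (forall w, w \in ws -> f w = h w) -> expect ws f = expect ws h.
Proof. by move=> H; rewrite /expect (eq_big_seq h). Qed.

Lemma prob_expect (P : pred M) : prob ws P = expect ws (fun w => (P w : nat)%:R).
Proof.
rewrite /prob /expect; congr (_ / _).
elim: ws => [|w s IH]; by rewrite ?big_nil ?big_cons //= natrD IH.
Qed.

Definition al (u : R) : R := if u == 1 then 0 else 1.
Definition be (u : R) : R := if u == 1 then 1 else -1.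

Lemma ind01 (t u : R) : (t == 0) || (t == 1) -> (u == 0) || (u == 1) ->
  ((t == u) : nat)%:R = al u + be u * t.
Proof.
rewrite /al /be.
move=> /orP[] /eqP -> /orP[] /eqP ->; rewrite ?eqxx /=;
  rewrite ?(negbTE (oner_neq0 R)) ?(eq_sym (0 : R) 1) ?(negbTE (oner_neq0 R)) /=; ring.
Qed.

Lemma indep_iff (X Y : M -> R) :
  (forall w, w \in ws -> (X w == 0) || (X w == 1)) ->
  (forall w, w \in ws -> (Y w == 0) || (Y w == 1)) ->
  expect ws X = 1 / 2 -> expect ws Y = 1 / 2 ->
  indep01 ws X Y <-> expect ws (fun w => X w * Y w) = 1 / 4.
Proof.
move=> HX HY EX EY.
have P1 : forall u, (u == 0) || (u == 1) -> prob ws (fun w => X w == u) = al u + be u * expect ws X.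
  move=> u Hu; rewrite prob_expect (@expect_eq _ (fun w => al u + be u * X w)).
    by rewrite expectD expectC expectZ.
  by move=> w wP; rewrite ind01 // HX.
have P2 : forall u, (u == 0) || (u == 1) -> prob ws (fun w => Y w == u) = al u + be u * expect ws Y.
  move=> u Hu; rewrite prob_expect (@expect_eq _ (fun w => al u + be u * Y w)).
    by rewrite expectD expectC expectZ.
  by move=> w wP; rewrite ind01 // HY.
have P12 : forall u v, (u == 0) || (u == 1) -> (v == 0) || (v == 1) ->
   prob ws (fun w => (X w == u) && (Y w == v)) =
   al u * al v + (al u * be v) * expect ws Y + (be u * al v) * expect ws X
     + (be u * be v) * expect ws (fun w => X w * Y w).
  move=> u v Hu Hv; rewrite prob_expect.
  rewrite (@expect_eq _ (fun w => al u * al v + (al u * be v * Y w + (be u * al v * X w + be u * be v * (X w * Y w))))).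
    by rewrite !expectD expectC !expectZ !addrA.
  move=> w wP; rewrite -mulnb natrM ind01 ?HX // ind01 ?HY //; ring.
split.
  move=> /(_ 1 1); rewrite !inE !eqxx orbT => /(_ isT isT).
  rewrite P12 ?eqxx ?orbT // P1 ?eqxx ?orbT // P2 ?eqxx ?orbT // EX EY /al /be eqxx.
  move=> H; lra.
move=> EXY u v; rewrite !inE => Hu Hv.
by rewrite P12 // P1 // P2 // EX EY EXY; field.
Qed.

End Prob.

Lemma enum_pos (za zb : int) : 0 < za -> 0 < zb -> za * zb < 4 ->
  (za = 1 /\ zb = 1) \/ (za = 1 /\ zb = 2) \/ (za = 2 /\ zb = 1) \/ (za = 1 /\ zb = 3) \/ (za = 3 /\ zb = 1).
Proof.
move=> ha hb hp.
have : za <= 3 by nia.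
have : zb <= 3 by nia.
move=> h1 h2.
have : (za = 1 \/ za = 2 \/ za = 3) by lia.
case=> [E|[E|E]]; subst za; lia.
Qed.

Lemma enum_neg (za zb : int) : za < 0 -> zb < 0 -> za * zb < 4 ->
  (za = -1 /\ zb = -1) \/ (za = -1 /\ zb = -2) \/ (za = -2 /\ zb = -1) \/ (za = -1 /\ zb = -3) \/ (za = -3 /\ zb = -1).
Proof.
move=> ha hb hp.
have : -3 <= za by nia.
have : -3 <= zb by nia.
move=> h1 h2.
have : (za = -1 \/ za = -2 \/ za = -3) by lia.
case=> [E|[E|E]]; subst za; lia.
Qed.

Set Bullet Behavior "Strict Subproofs".
Theorem theorem3p1 (R : realType) (n : nat) (Phi : seq 'rV[R]_n)
    (x : 'rV[R]_n) (ws : seq 'M[R]_n) (b g : 'rV[R]_n) (k : nat) :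
  root_system Phi -> regular Phi x ->
  uniq ws -> (forall M : 'M[R]_n, M \in ws <-> weyl Phi M) ->
  b \in pos_roots Phi x -> g \in pos_roots Phi x -> b != g ->
  is_ord b g k ->
  [/\ (0 <= dot b g ->
         covar ws (Xvar Phi x b) (Xvar Phi x g) = 1 / 4 - 1 / (2 * k%:R)),
      (dot b g <= 0 ->
         covar ws (Xvar Phi x b) (Xvar Phi x g) = - (1 / 4 - 1 / (2 * k%:R))) &
      (indep01 ws (Xvar Phi x b) (Xvar Phi x g) <-> dot b g = 0)].
Proof.
move=> rsP Hreg uws Hws bpos gpos bg Hord.
have [bx bP] : 0 < dot b x /\ b \in Phi by move: bpos; rewrite /pos_roots mem_filter => /andP.
have [gx gP] : 0 < dot g x /\ g \in Phi by move: gpos; rewrite /pos_roots mem_filter => /andP.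
have gnb : g != - b.
  by apply/eqP => E; move: gx; rewrite E dotNl oppr_gt0 => H; move: bx; rewrite ltNge le_eqVlt H orbT.
have nzb := phi_nz rsP bP; have nzg := phi_nz rsP gP.
have bbp : 0 < dot b b by rewrite dot_gt0.
have ggp : 0 < dot g g by rewrite dot_gt0.
have [za HA] : exists za : int, cA b g = za%:~R by case: rsP => _ _ _ _ Hc; exact: Hc.
have [zb HB] : exists zb : int, cB b g = zb%:~R by case: rsP => _ _ _ _ Hc; exact: Hc.
have EX := expect_half rsP Hws uws Hreg bP.
have EY := expect_half rsP Hws uws Hreg gP.
have wsnz := size_ws_neq0 Hws.
have X01 : forall a w, w \in ws -> (Xvar Phi x a w == 0) || (Xvar Phi x a w == 1).
  by move=> a w _; rewrite /Xvar; case: (_ \in _); rewrite eqxx ?orbT.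
have IND := indep_iff wsnz (X01 b) (X01 g) EX EY.
set d := dot b g.
have cs := cs_strict rsP bP gP bg gnb.
have HP : (za * zb)%:~R = 4 * d ^+ 2 / (dot b b * dot g g) :> R.
  by rewrite intrM -HA -HB /cA /cB [dot g b]dotC /d; field; rewrite !gt_eqF.
have Hlt : za * zb < 4.
  have : (za * zb)%:~R < (4 : int)%:~R :> R.
    rewrite HP ltr_pdivrMr ?mulr_gt0 //.
    by rewrite (_ : (4 : int)%:~R = 4 :> R) // ltr_pM2l.
  by rewrite ltr_int.
have HAd : za%:~R = 2 * d / dot b b :> R by rewrite -HA /cA [dot g b]dotC.
have HBd : zb%:~R = 2 * d / dot g g :> R by rewrite -HB /cB.
have Hcase : forall (m N : nat), (0 < m)%N ->
    fwz 1 0 za zb (rw m) = (0, 0) -> fwz 0 1 za zb (rw m) = (0, 0) ->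
    all (fun j => fwz 2 zb za zb (rw j) != (0, 0)) (iota 1 m.-1) ->
    (forall u v : R, (forall s, lin (cb za zb s) u v != 0) -> (forall s, lin (cg za zb s) u v != 0) ->
      (\sum_(s <- words m) bothz za zb u v s = N)%N) ->
    k = m /\ expect ws (fun w => Xvar Phi x b w * Xvar Phi x g w) = N%:R / (2 * m)%:R.
  move=> m N m0 H1 H0 Hall Hc; split.
    exact: (k_eq rsP uws bP gP bg gnb HA HB m0 H1 H0 Hall Hord).
  exact: (expect_bg rsP Hws uws Hreg bP gP bg gnb HA HB m0 Hc).
rewrite /covar EX EY.
clear X01 HA HB HP.
case: (ltgtP d 0) => Hd.
- have za0 : za < 0.
    by rewrite -(ltrz0 R) HAd ltr_pdivrMr // mul0r; lra.
  have zb0 : zb < 0.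
    by rewrite -(ltrz0 R) HBd ltr_pdivrMr // mul0r; lra.
  case: (enum_neg za0 zb0 Hlt) => [[-> ->]|[[-> ->]|[[-> ->]|[[-> ->]|[-> ->]]]]] in Hcase *.
  + have [d1 d2 d3] := dat2.
    have [-> HE] := Hcase 3%N 1%N isT d1 d2 d3 (@cnt2 R).
    rewrite HE; split => [H|H|]; [exfalso; lra | by field | apply: (iff_trans IND); rewrite HE; split => H; exfalso; lra].
  + have [d1 d2 d3] := dat5.
    have [-> HE] := Hcase 4%N 1%N isT d1 d2 d3 (@cnt5 R).
    rewrite HE; split => [H|H|]; [exfalso; lra | by field | apply: (iff_trans IND); rewrite HE; split => H; exfalso; lra].
  + have [d1 d2 d3] := dat6.
    have [-> HE] := Hcase 4%N 1%N isT d1 d2 d3 (@cnt6 R).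
    rewrite HE; split => [H|H|]; [exfalso; lra | by field | apply: (iff_trans IND); rewrite HE; split => H; exfalso; lra].
  + have [d1 d2 d3] := dat9.
    have [-> HE] := Hcase 6%N 1%N isT d1 d2 d3 (@cnt9 R).
    rewrite HE; split => [H|H|]; [exfalso; lra | by field | apply: (iff_trans IND); rewrite HE; split => H; exfalso; lra].
  + have [d1 d2 d3] := dat10.
    have [-> HE] := Hcase 6%N 1%N isT d1 d2 d3 (@cnt10 R).
    rewrite HE; split => [H|H|]; [exfalso; lra | by field | apply: (iff_trans IND); rewrite HE; split => H; exfalso; lra].
- have za0 : 0 < za.
    by rewrite -(ltr0z R) HAd divr_gt0 //; lra.
  have zb0 : 0 < zb.
    by rewrite -(ltr0z R) HBd divr_gt0 //; lra.
  case: (enum_pos za0 zb0 Hlt) => [[-> ->]|[[-> ->]|[[-> ->]|[[-> ->]|[-> ->]]]]] in Hcase *.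
  + have [d1 d2 d3] := dat1.
    have [-> HE] := Hcase 3%N 2%N isT d1 d2 d3 (@cnt1 R).
    rewrite HE; split => [H|H|]; [by field | exfalso; lra | apply: (iff_trans IND); rewrite HE; split => H; exfalso; lra].
  + have [d1 d2 d3] := dat3.
    have [-> HE] := Hcase 4%N 3%N isT d1 d2 d3 (@cnt3 R).
    rewrite HE; split => [H|H|]; [by field | exfalso; lra | apply: (iff_trans IND); rewrite HE; split => H; exfalso; lra].
  + have [d1 d2 d3] := dat4.
    have [-> HE] := Hcase 4%N 3%N isT d1 d2 d3 (@cnt4 R).
    rewrite HE; split => [H|H|]; [by field | exfalso; lra | apply: (iff_trans IND); rewrite HE; split => H; exfalso; lra].
  + have [d1 d2 d3] := dat7.
    have [-> HE] := Hcase 6%N 5%N isT d1 d2 d3 (@cnt7 R).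
    rewrite HE; split => [H|H|]; [by field | exfalso; lra | apply: (iff_trans IND); rewrite HE; split => H; exfalso; lra].
  + have [d1 d2 d3] := dat8.
    have [-> HE] := Hcase 6%N 5%N isT d1 d2 d3 (@cnt8 R).
    rewrite HE; split => [H|H|]; [by field | exfalso; lra | apply: (iff_trans IND); rewrite HE; split => H; exfalso; lra].
- have za0 : za = 0 by apply/eqP; rewrite -(intr_eq0 R) HAd Hd mulr0 mul0r.
  have zb0 : zb = 0 by apply/eqP; rewrite -(intr_eq0 R) HBd Hd mulr0 mul0r.
  rewrite za0 zb0 in Hcase.
  have [d1 d2 d3] := dat0.
    have [-> HE] := Hcase 2%N 1%N isT d1 d2 d3 (@cnt0 R).
  rewrite HE; split => [H|H|]; [by field | by field | apply: (iff_trans IND); rewrite HE; split => H; [exact: Hd | by field]].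
Qed.
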